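(* Let $q\ge 4$ and $t\ge 1$ be integers and let $M$ be a matroid with $\epsilon(M)\ge \frac{q^{r(M)}-1}{q-1}$ and $r(M)\ge 3t$. If $M$ is not round, then either $M$ has a $U_{2,q^2+2}$-minor or there is a round restriction $N$ of $M$ such that $r(N)\ge t$ and $\epsilon(N)>\frac{q^{r(N)}-1}{q-1}$.
   Context: A matroid $M$ is round if $E(M)$ cannot be partitioned into two sets each of rank less than $r(M)$. A point is a rank-$1$ flat and $\epsilon(M)$ is the number of points of $M$. $U_{2,m}$ is the uniform matroid of rank $2$ on $m$ elements. *)

(* Defs.v *)
From mathcomp Require Import all_boot.
Set Implicit Arguments. Unset Strict Implicit. Unset Printing Implicit Defensive.

Section Matroids.
Variable T : finType.

(* (E, r) is a matroid with ground set E and rank function r (only the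
   values of r on subsets of E matter). Standard rank axioms R1-R3. *)
Definition is_matroid (E : {set T}) (r : {set T} -> nat) : Prop :=
  [/\ forall X : {set T}, X \subset E -> r X <= #|X|,
      forall X Y : {set T}, X \subset Y -> Y \subset E -> r X <= r Y &
      forall X Y : {set T}, X \subset E -> Y \subset E ->
        r (X :|: Y) + r (X :&: Y) <= r X + r Y].

Definition mrank (E : {set T}) (r : {set T} -> nat) : nat := r E.

Definition is_flat (E : {set T}) (r : {set T} -> nat) (X : {set T}) : bool :=
  (X \subset E) && [forall e in E :\: X, r X < r (e |: X)].

Definition eps (E : {set T}) (r : {set T} -> nat) : nat :=
  #|[set X : {set T} | is_flat E r X && (r X == 1)]|.

Definition round (E : {set T}) (r : {set T} -> nat) : Prop :=
  ~ exists X Y : {set T},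
      [/\ X :|: Y = E, X :&: Y = set0, r X < r E & r Y < r E].

(* the minor M / C \ D (C, D disjoint subsets of E):
   ground set E - (C u D), rank X |-> r(X u C) - r(C) *)
Definition minor_ground (E C D : {set T}) : {set T} := E :\: (C :|: D).
Definition minor_rank (r : {set T} -> nat) (C : {set T}) : {set T} -> nat :=
  fun X => r (X :|: C) - r C.

Definition is_U2 (m : nat) (E' : {set T}) (r' : {set T} -> nat) : Prop :=
  #|E'| = m /\ forall X : {set T}, X \subset E' -> r' X = minn #|X| 2.

Definition has_U2_minor (m : nat) (E : {set T}) (r : {set T} -> nat) : Prop :=
  exists C D : {set T},
    [/\ C \subset E, D \subset E, [disjoint C & D] &
        is_U2 m (minor_ground E C D) (minor_rank r C)].

End Matroids.

(* Main.v *)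
Require Import Defs.
From mathcomp Require Import all_boot zify.
From Stdlib Require Import Classical.
Set Implicit Arguments. Unset Strict Implicit. Unset Printing Implicit Defensive.

Fixpoint Kf (l k : nat) : nat := if k is k'.+1 then 1 + l * Kf l k' else 0.

Lemma Kf_mono l a b : a <= b -> Kf l a <= Kf l b.
Proof.
have step : forall k, Kf l k <= Kf l k.+1.
  elim=> [|k IH] //=; rewrite leq_add2l; exact: leq_mul.
move=> ab; rewrite -(subnKC ab); elim: (b - a) => [|k IH]; first by rewrite addn0.
by apply: leq_trans IH _; rewrite addnS; apply: step.
Qed.

Lemma Kf_eq l k : 1 <= l -> Kf l k * (l - 1) + 1 = l ^ k.
Proof.
move=> l1; elim: k => [|k IH] //=.
rewrite expnS -IH mulnDl mul1n -mulnA mulnDr muln1.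
have : 1 + (l - 1) = l by lia.
lia.
Qed.

Definition Wf (q t K n : nat) := q ^ n - 1 + 2 ^ (n - (t - 1)) * K * (q - 1).

Lemma Wf_mono q t K a b : 0 < q -> a <= b -> Wf q t K a <= Wf q t K b.
Proof.
move=> q0 ab; rewrite /Wf; apply: leq_add.
  exact: leq_sub2r (leq_pexp2l q0 ab).
apply: leq_mul => //; apply: leq_mul => //; apply: leq_pexp2l => //; exact: leq_sub2r.
Qed.

Lemma Wf_double q t K m : 2 <= q -> t - 1 <= m -> 2 * Wf q t K m <= Wf q t K m.+1.
Proof.
move=> q2 tm; rewrite /Wf mulnDr (subSn tm) !expnS -!mulnA.
have h1 : 1 <= q ^ m by rewrite expn_gt0 (ltnW q2).
have h2 : 2 * q ^ m <= q * q ^ m by apply: leq_mul.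
set a := q ^ m in h1 h2 *; set b := 2 ^ (m - (t - 1)) * (K * (q - 1)).
lia.
Qed.

Lemma final_arith q t m : 4 <= q -> 1 <= t -> 3 * t <= m.+1 ->
  2 * Wf q t (Kf (q ^ 2) (t - 1)) m < q ^ m.+1 - 1.
Proof.
move=> q4 t1 hm.
set a := t - 1; set Kt := Kf (q ^ 2) a.
have hK : Kt * (q ^ 2 - 1) < q ^ (2 * a).
  have := Kf_eq a (_ : 1 <= q ^ 2); rewrite -/Kt expnM mulnC => <-; last by rewrite expn_gt0 (leq_trans _ q4).
  by rewrite addn1.
set d := m - (3 * a + 2).
have em : m = a + 2 + d + 2 * a by rewrite /d /a; lia.
have e2 : (m - a).+1 = 2 * a + 3 + d by rewrite /a em; lia.
have hp : 2 ^ (m - a).+1 <= q ^ (a + 2 + d).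
  rewrite e2; apply: (@leq_trans (4 ^ (a + 2 + d))).
    rewrite (_ : 4 = 2 ^ 2) // -expnM leq_exp2l //; lia.
  rewrite leq_exp2r //; lia.
set B := 2 ^ (m - a).+1 * Kt * (q - 1).
have hB : B * (q + 1) < q ^ m.
  have -> : B * (q + 1) = 2 ^ (m - a).+1 * (Kt * (q ^ 2 - 1)).
    rewrite /B -!mulnA; congr (_ * (_ * _)).
    have -> : q ^ 2 - 1 = (q - 1) * (q + 1) by rewrite mulnBl mul1n mulnDr muln1; lia.
    done.
  have : 2 ^ (m - a).+1 * (Kt * (q ^ 2 - 1)) < 2 ^ (m - a).+1 * q ^ (2 * a).
    by rewrite ltn_pmul2l ?expn_gt0.
  move/leq_trans; apply.
  have -> : q ^ m = q ^ (a + 2 + d) * q ^ (2 * a) by rewrite -expnD -em.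
  exact: leq_mul hp (leqnn _).
have hB2 : B < q ^ m.
  apply: leq_ltn_trans hB; apply: leq_pmulr; lia.
have hqm : 1 <= q ^ m by rewrite expn_gt0 (leq_trans _ q4).
have hq : 4 * q ^ m <= q * q ^ m by apply: leq_mul.
rewrite /Wf -/a -/Kt mulnDr expnS.
have -> : 2 * (2 ^ (m - a) * Kt * (q - 1)) = B by rewrite /B expnS !mulnA.
set x := q ^ m in hB2 hqm hq *.
lia.
Qed.

Lemma card_cover_le (T : finType) (I : {set T}) (F : T -> {set T}) (S : {set T}) :
  S \subset \bigcup_(g in I) F g -> #|S| <= \sum_(g in I) #|F g|.
Proof.
have [n] := ubnP #|I|; elim: n I S => // n IH I S ltI.
case: (set_0Vmem I) => [->|[g gI]].
  rewrite big_set0 subset0 => /eqP ->; by rewrite cards0.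
move=> sS; rewrite (big_setD1 g gI) /=; move: sS; rewrite (big_setD1 g gI) /= => sS.
rewrite -(cardsID (F g) S).
apply: leq_add; first by apply: subset_leq_card; apply: subsetIr.
apply: IH; first by rewrite (cardsD1 g I) gI add1n ltnS in ltI.
apply/subsetP => x; rewrite !inE => /andP[xF xS].
by move/subsetP: sS => /(_ x xS); rewrite inE (negbTE xF).
Qed.

Section M.
Variable T : finType.
Variable E : {set T}.
Variable r : {set T} -> nat.
Hypothesis HM : is_matroid E r.

Lemma rcard (X : {set T}) : X \subset E -> r X <= #|X|.
Proof. by case: HM => H _ _; apply: H. Qed.
Lemma rmono (X Y : {set T}) : X \subset Y -> Y \subset E -> r X <= r Y.
Proof. by case: HM => _ H _; apply: H. Qed.
Lemma rsub (X Y : {set T}) : X \subset E -> Y \subset E -> r (X :|: Y) + r (X :&: Y) <= r X + r Y.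
Proof. by case: HM => _ _ H; apply: H. Qed.
Lemma r0 : r set0 = 0.
Proof. by apply/eqP; rewrite -leqn0 -(cards0 T) rcard ?sub0set. Qed.

Lemma r1 x (B : {set T}) : x \in E -> B \subset E -> r (x |: B) <= r B + 1.
Proof.
move=> xE BE.
have s1 : [set x] \subset E by rewrite sub1set.
have := rsub s1 BE; have := rcard s1; rewrite cards1.
have := rmono (subsetIr [set x] B) BE. lia.
Qed.

Lemma rU_le (A X : {set T}) : A \subset E -> X \subset E -> r (X :|: A) <= r A + #|X|.
Proof.
move=> AE; have [n] := ubnP #|X|; elim: n X => // n IH X ltX XE.
case: (set_0Vmem X) => [->|[x xX]]; first by rewrite set0U cards0 addn0.
have XE' : X :\ x \subset E by apply: subset_trans XE; apply: subsetDl.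
rewrite -{1}(setD1K xX) -setUA (cardsD1 x X) xX add1n.
have xE : x \in E by move/subsetP: XE; apply.
have BE : (X :\ x) :|: A \subset E by rewrite subUset XE' AE.
apply: leq_trans (r1 xE BE) _.
rewrite !addnS addn0 ltnS; apply: IH => //.
by rewrite (cardsD1 x X) xX add1n ltnS in ltX.
Qed.

Lemma rcl (A F : {set T}) : A \subset E -> F \subset E ->
  (forall f, f \in F -> r (f |: A) = r A) -> r (F :|: A) = r A.
Proof.
move=> AE; have [n] := ubnP #|F|; elim: n F => // n IH F ltF FE Hf.
case: (set_0Vmem F) => [->|[x xF]]; first by rewrite set0U.
have FE' : F :\ x \subset E by apply: subset_trans FE; apply: subsetDl.
have xE : x \in E by move/subsetP: FE; apply.
rewrite -{1}(setD1K xF) -setUA.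
have IH1 : r ((F :\ x) :|: A) = r A.
  apply: IH => //; first by rewrite (cardsD1 x F) xF add1n ltnS in ltF.
  by move=> f; rewrite inE => /andP[_ /Hf].
have BE : (F :\ x) :|: A \subset E by rewrite subUset FE' AE.
have xAE : x |: A \subset E by rewrite subUset sub1set xE AE.
have h := rsub xAE BE.
have e1 : (x |: A) :|: ((F :\ x) :|: A) = x |: ((F :\ x) :|: A).
  by rewrite setUCA -setUA setUid setUCA.
rewrite e1 Hf // IH1 in h.
have h2 := rmono (_ : A \subset (x |: A) :&: ((F :\ x) :|: A)) (subset_trans (subsetIl _ _) xAE).
rewrite subsetI subsetUr subsetUr in h2; have {h2} h2 := h2 isT.
have xBE : x |: ((F :\ x) :|: A) \subset E by rewrite subUset sub1set xE BE.
have h3 := rmono (subsetUr [set x] ((F :\ x) :|: A)) xBE.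
rewrite IH1 in h3. apply/eqP; rewrite eqn_leq h3 andbT.
have : r ((x |: A) :&: (F :\ x :|: A)) + r (x |: (F :\ x :|: A)) <= r A + r A by rewrite addnC.
move=> h4. move: (leq_trans (leq_add h2 (leqnn _)) h4). by rewrite leq_add2l.
Qed.


Definition pts (N : {set T}) := [set P : {set T} | is_flat N r P && (r P == 1)].

Lemma epsE (N : {set T}) : eps N r = #|pts N|.
Proof. by []. Qed.

Lemma ptsP (N P : {set T}) : P \in pts N ->
  [/\ P \subset N, r P = 1 & forall e, e \in N -> e \notin P -> r P < r (e |: P)].
Proof.
rewrite inE /is_flat => /andP[/andP[PN /forall_inP H] /eqP rP]; split => //.
by move=> e eN eP; apply: H; rewrite inE eN eP.
Qed.

Lemma pts_eq (N P P' Z : {set T}) : N \subset E -> P \in pts N -> P' \in pts N ->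
  Z \subset P -> Z \subset P' -> r Z = 1 -> P = P'.
Proof.
move=> NE /ptsP[PN rP fP] /ptsP[PN' rP' fP'] ZP ZP' rZ.
have PE := subset_trans PN NE; have PE' := subset_trans PN' NE.
have h := rsub PE PE'.
have h2 := rmono (_ : Z \subset P :&: P') (subset_trans (subsetIl _ _) PE).
rewrite subsetI ZP ZP' in h2; have {h2} h2 := h2 isT.
have hU : r (P :|: P') <= 1 by rewrite rP rP' rZ in h h2; lia.
have sub : forall A B : {set T}, A \subset N -> B \subset N -> r A = 1 -> r B = 1 ->
   (forall e, e \in N -> e \notin B -> r B < r (e |: B)) ->
   r (A :|: B) <= 1 -> A \subset B.
  move=> A B AN BN rA rB fB hAB; apply/subsetP => e eA.
  apply/negPn/negP => eB.
  have eN : e \in N by move/subsetP: AN; apply.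
  have := fB e eN eB.
  have : r (e |: B) <= r (A :|: B).
    apply: rmono; first by rewrite setSU // sub1set.
    by rewrite subUset (subset_trans AN NE) (subset_trans BN NE).
  move=> k1 k2; have := leq_trans k2 (leq_trans k1 hAB); by rewrite rB.
apply/eqP; rewrite eqEsubset; apply/andP; split.
  by apply: sub.
by apply: sub => //; rewrite setUC.
Qed.

Lemma restrict_pt (N W P : {set T}) : N \subset E -> W \subset N -> P \in pts N ->
  r (P :&: W) = 1 -> P :&: W \in pts W.
Proof.
move=> NE WN /ptsP[PN rP fP] rPW.
rewrite inE /is_flat rPW eqxx andbT subsetIr /=.
apply/forall_inP => e; rewrite !inE => /andP[eNPW eW].
have eP : e \notin P by move: eNPW; rewrite eW andbT.
have eN : e \in N by move/subsetP: WN; apply.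
have PE := subset_trans PN NE.
have eE : e \in E by move/subsetP: NE; apply.
have A1E : e |: (P :&: W) \subset E.
  by rewrite subUset sub1set eE (subset_trans (subsetIl _ _) PE).
have h := rsub A1E PE.
have e1 : (e |: (P :&: W)) :|: P = e |: P.
  by rewrite -setUA (setUidPr (subsetIl _ _)).
have e2 : (e |: (P :&: W)) :&: P = P :&: W.
  rewrite setIUl (setIidPl (subsetIl _ _)).
  have -> : [set e] :&: P = set0.
    by apply/setP => x; rewrite !inE; apply/andP => -[/eqP -> ]; apply/negP.
  by rewrite set0U.
rewrite e1 e2 in h.
have := fP e eN eP. lia.
Qed.

Lemma eps_union (N X Y : {set T}) : N \subset E -> X :|: Y = N ->
  eps N r <= eps X r + eps Y r.
Proof.
move=> NE defN.
have XN : X \subset N by rewrite -defN subsetUl.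
have YN : Y \subset N by rewrite -defN subsetUr.
rewrite !epsE -(cardsID [set P | r (P :&: X) == 1] (pts N)).
have gen : forall (W : {set T}) (A : {set {set T}}), W \subset N -> A \subset pts N ->
   (forall P, P \in A -> r (P :&: W) = 1) -> #|A| <= #|pts W|.
  move=> W A WN AN HA.
  have inj : {in A &, injective (fun P => P :&: W)}.
    move=> P P' PA P'A eqW.
    have PN : P \in pts N by move/subsetP: AN; apply.
    have P'N : P' \in pts N by move/subsetP: AN; apply.
    apply: (pts_eq (N := N) (Z := P :&: W)) => //; first exact: subsetIl.
      by rewrite eqW subsetIl.
    exact: HA.
  rewrite -(card_in_imset inj).
  apply: subset_leq_card; apply/subsetP => Q; case/imsetP => P PA ->.
  apply: (restrict_pt (N := N)) => //; [by move/subsetP: AN; apply | by apply: HA].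
apply: leq_add; apply: gen => //; rewrite ?subsetIl ?subsetDl //.
- by move=> P; rewrite !inE => /andP[_ /eqP].
- move=> P; rewrite !inE => /andP[rX PN].
  have PN0 : P \in pts N by rewrite inE.
  have [PN' rP _] := ptsP PN0.
  have PE := subset_trans PN' NE.
  have h := rsub (subset_trans (subsetIl P X) PE) (subset_trans (subsetIl P Y) PE).
  rewrite -setIUr defN (setIidPl PN') rP in h.
  have h1 := rmono (subsetIl P X) PE; have h2 := rmono (subsetIl P Y) PE.
  rewrite rP in h1 h2. move: rX h; rewrite eq_sym.  lia.
Qed.


Definition simple (C S : {set T}) := [/\ S \subset E,
  forall x, x \in S -> r (x |: C) = r C + 1 &
  forall x y, x \in S -> y \in S -> x != y -> r (x |: (y |: C)) = r C + 2].

Lemma U2_lemma (C L : {set T}) : C \subset E -> simple C L -> r (L :|: C) <= r C + 2 ->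
  forall X : {set T}, X \subset L -> minor_rank r C X = minn #|X| 2.
Proof.
move=> CE [LE H1 H2] HL X XL.
have XE := subset_trans XL LE.
have XCE : X :|: C \subset E by rewrite subUset XE CE.
have up1 := rU_le CE XE.
have up2 := rmono (setSU C XL) (_ : L :|: C \subset E).
rewrite subUset LE CE in up2; have {up2} up2 := up2 isT.
have mC := rmono (subsetUr X C) XCE.
have low : r C + minn #|X| 2 <= r (X :|: C).
  case: (ltnP 1 #|X|) => h.
    have /card_gt1P [x [y [xX yX xy]]] := h.
    rewrite (minn_idPr (h : 2 <= #|X|)) -(H2 x y) //; try by move/subsetP: XL; apply.
    apply: rmono => //; apply/subsetP => z; rewrite !inE => /or3P[/eqP->|/eqP->|zC];
     by rewrite ?xX ?yX ?zC ?orbT.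
  move: h; rewrite leq_eqVlt => /orP[/cards1P [x eX]|].
    rewrite eX cards1 /= -(H1 x); last by move/subsetP: XL; apply; rewrite eX set11.
    by rewrite -eX.
  rewrite ltnS leqn0 cards_eq0 => /eqP ->; by rewrite cards0 /= addn0 set0U.
rewrite /minor_rank.
have : r (X :|: C) <= r C + minn #|X| 2.
  case: (leqP #|X| 2) => h; first by [].
  exact: leq_trans up2 HL.
lia.
Qed.

Lemma exists_sub_card (A : {set T}) m : m <= #|A| -> exists2 Z : {set T}, Z \subset A & #|Z| = m.
Proof.
have [n] := ubnP #|A|; elim: n A => // n IH A ltA hm.
case: (ltnP m #|A|) => h; last by exists A => //; apply/eqP; rewrite eqn_leq hm h.
have [x xA] : exists x, x \in A.
  by apply/set0Pn; rewrite -card_gt0; apply: leq_ltn_trans h.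
have c := cardsD1 x A; rewrite xA add1n in c.
have l1 : #|A :\ x| < n by rewrite c ltnS in ltA.
have l2 : m <= #|A :\ x| by rewrite c ltnS in h.
have [Z ZA cZ] := IH (A :\ x) l1 l2.
by exists Z => //; apply: subset_trans ZA (subsetDl _ _).
Qed.


Lemma simple_sub (C S L : {set T}) : L \subset S -> simple C S -> simple C L.
Proof.
move=> LS [SE H1 H2]; split; first exact: subset_trans LS SE.
  by move=> x xL; apply: H1; move/subsetP: LS; apply.
by move=> x y xL yL; apply: H2; move/subsetP: LS; apply.
Qed.

Lemma simple_notin (C S : {set T}) x : simple C S -> x \in S -> x \notin C.
Proof.
case=> _ H1 _ xS; apply/negP => xC; have := H1 x xS.
by rewrite (setUidPr (_ : [set x] \subset C)) ?sub1set // -[X in X = _]addn0 => /eqP; rewrite eqn_add2l.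
Qed.


Lemma kung l : ~ has_U2_minor l.+2 E r ->
  forall k (C S : {set T}), C \subset E -> simple C S -> r (S :|: C) <= r C + k ->
  #|S| <= Kf l k.
Proof.
move=> noU; elim=> [|k IH] C S CE simS hr.
  case: (set_0Vmem S) => [->|[x xS]]; first by rewrite cards0.
  case: simS => SE H1 _; have := H1 x xS.
  have SCE : S :|: C \subset E by rewrite subUset SE CE.
  have xCS : x |: C \subset S :|: C by rewrite setSU // sub1set.
  have := leq_trans (rmono xCS SCE) hr; by rewrite (H1 x xS) addn0 addn1 ltnn.
case: (set_0Vmem S) => [->|[e eS]]; first by rewrite cards0.
have simS0 := simS; case: simS0 => SE H1 H2.
have eE : e \in E by move/subsetP: SE; apply.
set C' := e |: C.
have C'E : C' \subset E by rewrite subUset sub1set eE CE.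
have rC' : r C' = r C + 1 := H1 e eS.
set S' := S :\ e.
pose par f g := r (f |: (g |: C')) == r C' + 1.
have parC : forall f g, par f g = par g f by move=> f g; rewrite /par setUCA.
pose Pm := [pred A : {set T} | (A \subset S') &&
   [forall x in A, forall y in A, (x != y) ==> ~~ par x y]].
have P0 : Pm set0 by rewrite /= sub0set; apply/forall_inP => x; rewrite inE.
have [R /maxsetP [PR maxR] _] := maxset_exists P0.
move/andP: PR => [RS' /forall_inP Rpw].
have RS : R \subset S by apply: subset_trans RS' (subsetDl _ _).
have inS' : forall x, x \in R -> x \in S /\ x != e.
  move=> x xR; move/subsetP: RS' => /(_ x xR); rewrite !inE => /andP[-> ->]; done.
have rRx : forall x, x \in R -> r (x |: C') = r C' + 1.
  move=> x xR; have [xS xe] := inS' x xR; by rewrite rC' (H2 x e) // -addnA.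
have simR : simple C' R.
  split; first exact: subset_trans RS SE.
    exact: rRx.
  move=> x y xR yR xy.
  have := Rpw x xR => /forall_inP /(_ y yR); rewrite xy /= /par => /eqP np.
  have xE : x \in E by move/subsetP: SE; apply; have [] := inS' x xR.
  have yE : y \in E by move/subsetP: SE; apply; have [] := inS' y yR.
  have yC'E : y |: C' \subset E by rewrite subUset sub1set yE C'E.
  have up := r1 xE yC'E; rewrite (rRx y yR) in up.
  have s1 : x |: C' \subset x |: (y |: C') by rewrite setUS // subsetUr.
  have s2 : x |: (y |: C') \subset E by rewrite subUset sub1set xE yC'E.
  have lo := rmono s1 s2; rewrite (rRx x xR) in lo.
  rewrite -addnA in up; apply/eqP; rewrite eqn_leq up /=.
  rewrite addnS ltn_neqAle lo andbT eq_sym; by apply/eqP.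
have hR : #|R| <= Kf l k.
  apply: (IH C' R C'E simR).
  have SCE : S :|: C \subset E by rewrite subUset SE CE.
  have s1 : R :|: C' \subset S :|: C.
    rewrite subUset (subset_trans RS (subsetUl _ _)) /= subUset sub1set.
    by rewrite in_setU eS subsetUr.
  apply: leq_trans (rmono s1 SCE) _; by rewrite rC' addnAC addn1 -addnS.
pose cls g := [set f in S' | par f g].
have cover : S' \subset \bigcup_(g in R) cls g.
  apply/subsetP => f fS'.
  case: (boolP [exists g in R, par f g]).
    case/exists_inP => g gR pfg; apply/bigcupP; exists g => //.
    by rewrite inE fS' pfg.
  rewrite negb_exists_in => /forall_inP npf.
  have Pf : Pm (f |: R).
    rewrite /= subUset sub1set fS' RS' /=.
    apply/forall_inP => x; rewrite in_setU1 => /orP[/eqP->|xR];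
      apply/forall_inP => y; rewrite in_setU1 => /orP[/eqP->|yR].
    - by rewrite eqxx.
    - by apply/implyP => _; apply: npf.
    - by apply/implyP => _; rewrite parC; apply: npf.
    - by have := Rpw x xR => /forall_inP /(_ y yR).
  have eqR := maxR _ Pf (subsetUr _ _).
  have fR : f \in R by rewrite -eqR setU11.
  apply/bigcupP; exists f => //.
  by rewrite inE fS' /par setUA setUid (rRx f fR) eqxx.
have clsb : forall g, g \in R -> #|cls g| <= l.
  move=> g gR; rewrite leqNgt; apply/negP => big.
  have [Z Zc cZ] := exists_sub_card big.
  apply: noU.
  set L := e |: Z.
  have ZS' : Z \subset S' by apply: subset_trans Zc _; apply/subsetP => f; rewrite inE => /andP[].
  have LS : L \subset S by rewrite subUset sub1set eS (subset_trans ZS' (subsetDl _ _)).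
  have simL := simple_sub LS simS.
  have LE : L \subset E := subset_trans LS SE.
  exists C, (E :\: (C :|: L)); split => //.
  - exact: subsetDl.
  - rewrite -setI_eq0; apply/eqP/setP => x; rewrite !inE.
    by case: (x \in C); rewrite ?andbF.
  - have -> : minor_ground E C (E :\: (C :|: L)) = L.
      apply/setP => x; rewrite /minor_ground !in_setD !in_setU !in_setD !in_setU.
      case: (boolP (x \in L)) => xL.
        have xE : x \in E by move/subsetP: LE; apply.
        rewrite (negbTE (simple_notin simL xL)) xE; move: xL; rewrite /L in_setU; by case: (x \in [set e]); case: (x \in Z).
      move: xL; rewrite /L in_setU; by case: (x \in [set e]); case: (x \in Z); case: (x \in C); case: (x \in E).
    split.
      rewrite cardsU1 cZ.
      have -> : e \notin Z.
        apply/negP => eZ; move/subsetP: ZS' => /(_ e eZ); by rewrite !inE eqxx.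
      by [].
    apply: U2_lemma => //.
    have gS : g \in S by have [] := inS' g gR.
    have gE : g \in E by move/subsetP: SE; apply.
    have gC'E : g |: C' \subset E by rewrite subUset sub1set gE C'E.
    have ZE : Z \subset E by apply: subset_trans LE; apply: subsetUr.
    have hcl := rcl gC'E ZE.
    have hcl' : r (Z :|: (g |: C')) = r (g |: C').
      apply: hcl => f fZ; rewrite (rRx g gR).
      move/subsetP: Zc => /(_ f fZ); rewrite inE /par => /andP[_ /eqP ->]; done.
    have eL : L :|: C = Z :|: C'.
      by apply/setP => x; rewrite !inE; case: (x == e); case: (x \in Z); case: (x \in C).
    rewrite eL.
    have s1 : Z :|: C' \subset Z :|: (g |: C') by rewrite setUS // subsetUr.
    have s2 : Z :|: (g |: C') \subset E by rewrite subUset ZE gC'E.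
    apply: leq_trans (rmono s1 s2) _.
    by rewrite hcl' (rRx g gR) rC' -addnA.
have cS := cardsD1 e S; rewrite eS add1n in cS.
rewrite cS /= ltnS.
apply: (leq_trans (card_cover_le cover)).
have hs : \sum_(g in R) #|cls g| <= \sum_(g in R) l.
  by apply: leq_sum => g gR; apply: clsb.
apply: (leq_trans hs).
rewrite sum_nat_const mulnC; exact: leq_mul (leqnn l) hR.
Qed.

Lemma pair_rank (N P P' : {set T}) x y : N \subset E -> P \in pts N -> P' \in pts N ->
  x \in P -> y \in P' -> r [set x] = 1 -> r [set y] = 1 -> P != P' -> r [set x; y] = 2.
Proof.
move=> NE PN P'N xP yP' rx ry PP'.
have [PsN rP fP] := ptsP PN.
have [PsN' rP' _] := ptsP P'N.
have PE := subset_trans PsN NE; have PE' := subset_trans PsN' NE.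
have xE : x \in E by move/subsetP: PE; apply.
have yE : y \in E by move/subsetP: PE'; apply.
have A1E : [set x; y] \subset E by rewrite subUset !sub1set xE yE.
have up : r [set x; y] <= 2.
  apply: leq_trans (rcard A1E) _; rewrite cards2; by case: (x != y).
apply/eqP; rewrite eqn_leq up /=; rewrite ltnNge; apply/negP => low.
have yP : y \in P.
  apply/negPn/negP => nyP.
  have yN : y \in N by move/subsetP: PsN'; apply.
  have f1 := fP y yN nyP.
  have h := rsub A1E PE.
  have h2 := rmono (_ : [set x] \subset [set x; y] :&: P) (subset_trans (subsetIr _ _) PE).
  rewrite subsetI sub1set in_set2 eqxx sub1set xP /= in h2.
  have {h2} h2 := h2 isT.
  have h3 := rmono (_ : y |: P \subset [set x; y] :|: P) (_ : [set x; y] :|: P \subset E).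
  rewrite setSU ?sub1set ?in_set2 ?eqxx ?orbT // subUset A1E PE in h3.
  have {h3} h3 := h3 isT isT.
  rewrite rx rP in h2 h f1.
  move: h h2 low f1 h3; clear -x; lia.
have yN : [set y] \subset P :&: P' by rewrite subsetI !sub1set yP yP'.
by move/eqP: PP'; apply; apply: (pts_eq (N := N) (Z := [set y])) => //;
  [apply: subset_trans yN (subsetIl _ _) | apply: subset_trans yN (subsetIr _ _)].
Qed.

Lemma pt_nonloop (N P : {set T}) : N \subset E -> P \in pts N ->
  exists2 x, x \in P & r [set x] = 1.
Proof.
move=> NE PN; have [PsN rP _] := ptsP PN; have PE := subset_trans PsN NE.
case: (pickP [pred x | (x \in P) && (r [set x] == 1)]) => [x /andP[xP /eqP rx]|none].
  by exists x.
have hP : forall f, f \in P -> r (f |: set0) = r set0.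
  move=> f fP; have := none f; rewrite /= fP /= setU0 r0 => /negbT.
  have fE : [set f] \subset E by rewrite sub1set; move/subsetP: PE; apply.
  have := rcard fE; rewrite cards1; case: (r [set f]) => [|[|n]] //.
have := rcl (sub0set E) PE hP; by rewrite setU0 rP r0.
Qed.

Lemma eps_kung l (N : {set T}) : ~ has_U2_minor l.+2 E r -> N \subset E ->
  eps N r <= Kf l (r N).
Proof.
move=> noU NE; rewrite epsE.
case: (set_0Vmem (pts N)) => [->|[P0 P0N]]; first by rewrite cards0.
have [x0 _ _] := pt_nonloop NE P0N.
pose rep (P : {set T}) := odflt x0 [pick x in P | r [set x] == 1].
have repP : forall P, P \in pts N -> rep P \in P /\ r [set rep P] = 1.
  move=> P PN; rewrite /rep; case: pickP => [x /andP[xP /eqP rx]|none] //=.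
  have [x xP rx] := pt_nonloop NE PN.
  by have := none x; rewrite xP rx eqxx.
have inj : {in pts N &, injective rep}.
  move=> P P' PN P'N eqr.
  have [xP rx] := repP P PN; have [xP' _] := repP P' P'N.
  apply: (pts_eq (N := N) (Z := [set rep P])) => //; rewrite sub1set //.
  by rewrite eqr.
rewrite -(card_in_imset inj).
have SN : [set rep P | P in pts N] \subset N.
  apply/subsetP => y; case/imsetP => P PN ->.
  have [PsN _ _] := ptsP PN; have [xP _] := repP P PN; by move/subsetP: PsN; apply.
apply: (kung noU (C := set0)); first exact: sub0set.
  split; first exact: subset_trans SN NE.
    move=> y; case/imsetP => P PN ->; by rewrite setU0 r0 (proj2 (repP P PN)).
  move=> y z; case/imsetP => P PN ->; case/imsetP => P' P'N -> ne.
  rewrite setU0 r0 add0n.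
  have [xP rx] := repP P PN; have [xP' rx'] := repP P' P'N.
  apply: (pair_rank NE PN P'N xP xP' rx rx').
  by apply: contraNneq ne => ->.
rewrite setU0 r0 add0n; exact: rmono SN NE.
Qed.

End M.

Theorem lemma2p5 (T : finType) (E : {set T}) (r : {set T} -> nat)
    (q t : nat) :
  is_matroid E r -> 4 <= q -> 1 <= t ->
  q ^ mrank E r - 1 <= eps E r * (q - 1) ->
  3 * t <= mrank E r ->
  ~ round E r ->
  has_U2_minor (q ^ 2 + 2) E r \/
  exists N : {set T},
    [/\ N \subset E, round N r, t <= mrank N r &
        q ^ mrank N r - 1 < eps N r * (q - 1)].
Proof.
move=> HM q4 t1 hdens hr nround.
case: (classic (has_U2_minor (q ^ 2 + 2) E r)) => [h|noU]; [by left|right].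
have noU' : ~ has_U2_minor (q ^ 2).+2 E r by rewrite -addn2.
apply: NNPP => noN.
have hround : forall N : {set T}, N \subset E -> round N r -> t <= r N ->
    eps N r * (q - 1) <= q ^ r N - 1.
  move=> N NE rN tN; rewrite leqNgt; apply/negP => h; apply: noN; exists N; by split.
set Kt := Kf (q ^ 2) (t - 1).
have q0 : 0 < q by apply: leq_trans q4.
have bound : forall n (N : {set T}), r N < n -> N \subset E -> eps N r * (q - 1) <= Wf q t Kt (r N).
  elim=> [|n IH] N ltN NE //.
  case: (ltnP (r N) t) => hN.
    have h1 := eps_kung HM noU' NE.
    have h2 : Kf (q ^ 2) (r N) <= Kt by apply: Kf_mono; lia.
    apply: leq_trans (leq_mul (leq_trans h1 h2) (leqnn (q - 1))) _.
    rewrite /Wf; apply: leq_trans (leq_addl _ _); rewrite -mulnA; apply: leq_pmull.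
    by rewrite expn_gt0.
  case: (classic (round N r)) => rN.
    apply: leq_trans (hround N NE rN hN) _; exact: leq_addr.
  move: rN; rewrite /round => /NNPP [X [Y [defN _ rX rY]]].
  have XN : X \subset N by rewrite -defN subsetUl.
  have YN : Y \subset N by rewrite -defN subsetUr.
  have XE := subset_trans XN NE; have YE := subset_trans YN NE.
  have hX := IH X (leq_trans rX ltN) XE.
  have hY := IH Y (leq_trans rY ltN) YE.
  have hU := eps_union HM NE defN.
  move: rX rY; case eq: (r N) => [|m] // rX rY.
  apply: leq_trans (leq_mul hU (leqnn (q - 1))) _; rewrite mulnDl.
  have q2 : 2 <= q by apply: leq_trans _ q4.
  have tm : t - 1 <= m by rewrite eq in hN; lia.
  have hd := @Wf_double q t Kt m q2 tm.
  apply: leq_trans hd.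
  rewrite mul2n -addnn; apply: leq_add.
    apply: leq_trans hX _; apply: Wf_mono => //.
  apply: leq_trans hY _; apply: Wf_mono => //.
move: nround; rewrite /round => /NNPP [X [Y [defN _ rX rY]]].
have XE : X \subset E by rewrite -defN subsetUl.
have YE : Y \subset E by rewrite -defN subsetUr.
have hX := bound _ X (ltnSn _) XE.
have hY := bound _ Y (ltnSn _) YE.
have hU := eps_union HM (subxx E) defN.
move: rX rY hdens hr; rewrite /mrank; case eq: (r E) => [|m] // rX rY hdens hr.
have := final_arith q4 t1 hr.
have : eps E r * (q - 1) <= 2 * Wf q t Kt m.
  apply: leq_trans (leq_mul hU (leqnn (q - 1))) _; rewrite mulnDl mul2n -addnn.
  apply: leq_add.
    apply: leq_trans hX _; apply: Wf_mono => //.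
  apply: leq_trans hY _; apply: Wf_mono => //.
rewrite -/Kt; move=> h1 h2; have := leq_ltn_trans (leq_trans hdens h1) h2.
by rewrite ltnn.
Qed.
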